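(* Let $G=(V,E)$ be a graph with colouring $f:V\to\{B,R\}$. There exists an optimal solution $E'$ to the MIE problem on $(G,f)$ such that no edge of $E'\setminus E$ is incident to a red node and no edge of $E\setminus E'$ is incident to a blue node (i.e., every added edge joins two blue nodes and every removed edge joins two red nodes).
   Context: Graphs are finite, simple and undirected. A colouring $f:V\to\{B,R\}$ partitions $V$ into the blue nodes $B=f^{-1}(B)$ and red nodes $R=f^{-1}(R)$. For an edge set $E'$ on $V$ and $v\in V$, let $b_{E'}(v)$ and $r_{E'}(v)$ be the numbers of blue and red neighbours of $v$ in $(V,E')$. A node $v$ is under (majority) illusion in $(V,E')$ if $r_{E'}(v)>b_{E'}(v)$. Standing assumption: $|B|>|R|$. An optimal solution to MIE is an edge set $E'$ on $V$ such that no node is under illusion in $(V,E')$ and $|E\setminus E'|+|E'\setminus E|$ is minimum among all such sets. *)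

(* Defs.v *)
From mathcomp Require Import all_boot.
Set Implicit Arguments. Unset Strict Implicit. Unset Printing Implicit Defensive.

(* An edge is a 2-element subset of T; an edge set
   (graph) on T is a set of such edges. *)

Definition is_blue {T : finType} (f : T -> bool) (v : T) : bool := f v.
Definition is_red {T : finType} (f : T -> bool) (v : T) : bool := ~~ f v.

Definition blue_nodes {T : finType} (f : T -> bool) : {set T} := [set v | is_blue f v].
Definition red_nodes {T : finType} (f : T -> bool) : {set T} := [set v | is_red f v].

Definition simple_edge_set {T : finType} (E : {set {set T}}) : Prop :=
  forall e, e \in E -> #|e| = 2.

Definition nbrs {T : finType} (E : {set {set T}}) (v : T) : {set T} :=
  [set u | (u != v) && ([set u; v] \in E)].

Definition blue_deg {T : finType} (f : T -> bool) (E : {set {set T}}) (v : T) : nat :=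
  #|[set u in nbrs E v | is_blue f u]|.
Definition red_deg {T : finType} (f : T -> bool) (E : {set {set T}}) (v : T) : nat :=
  #|[set u in nbrs E v | is_red f u]|.

Definition under_illusion {T : finType} (f : T -> bool) (E : {set {set T}}) (v : T) : Prop :=
  red_deg f E v > blue_deg f E v.

Definition edit_cost {T : finType} (E E' : {set {set T}}) : nat :=
  #|E :\: E'| + #|E' :\: E|.

Definition MIE_feasible {T : finType} (f : T -> bool) (E' : {set {set T}}) : Prop :=
  simple_edge_set E' /\ forall v, ~ under_illusion f E' v.

Definition MIE_optimal {T : finType} (f : T -> bool) (E E' : {set {set T}}) : Prop :=
  MIE_feasible f E' /\
  forall E'', MIE_feasible f E'' -> edit_cost E E' <= edit_cost E E''.

(* Main.v *)
Require Import Defs.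
From mathcomp Require Import all_boot zify.
From Stdlib Require Import Classical.
Set Implicit Arguments. Unset Strict Implicit. Unset Printing Implicit Defensive.

Lemma set2_inj (T : finType) (x y u v : T) : x != y ->
  [set u; v] = [set x; y] -> (u = x /\ v = y) \/ (u = y /\ v = x).
Proof.
move=> hxy H.
have hu : u \in [set x; y] by rewrite -H set21.
have hv : v \in [set x; y] by rewrite -H set22.
have hx : x \in [set u; v] by rewrite H set21.
have hy : y \in [set u; v] by rewrite H set22.
case/set2P: hu => hu; case/set2P: hv => hv; subst; auto.
- by move: hy; rewrite setUid inE eq_sym (negbTE hxy).
- by move: hx; rewrite setUid inE (negbTE hxy).
Qed.

Lemma nbrs_del (T : finType) (X : {set {set T}}) x y : x != y -> [set x; y] \in X ->
  nbrs (X :\ [set x; y]) x = nbrs X x :\ y /\ y \in nbrs X x.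
Proof.
move=> hxy hX; split; last by rewrite inE eq_sym hxy setUC hX.
apply/setP => u; rewrite !inE.
have [->|huy] := eqVneq u y.
  by rewrite setUC eqxx /= andbF.
case hux: (u == x) => //=.
case: eqP => //= /(set2_inj hxy) [] [] hh; subst; first by rewrite eqxx in hux.
by rewrite eqxx in huy.
Qed.

Lemma nbrs_del_other (T : finType) (X : {set {set T}}) x y v : v != x -> v != y ->
  nbrs (X :\ [set x; y]) v = nbrs X v.
Proof.
move=> hvx hvy; apply/setP => u; rewrite !inE.
case huv: (u == v) => //=.
case: eqP => //= H.
have : v \in [set x; y] by rewrite -H set22.
by case/set2P => h; [move: hvx | move: hvy]; rewrite h eqxx.
Qed.

Lemma nbrs_add (T : finType) (X : {set {set T}}) x y : x != y -> [set x; y] \notin X ->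
  nbrs ([set x; y] |: X) x = y |: nbrs X x /\ y \notin nbrs X x.
Proof.
move=> hxy hX; split; last by rewrite inE eq_sym hxy setUC (negbTE hX).
apply/setP => u; rewrite !inE.
have [->|huy] := eqVneq u y.
  by rewrite setUC eqxx eq_sym hxy.
case hux: (u == x) => //=.
case: eqP => //= /(set2_inj hxy) [] [] hh; subst; first by rewrite eqxx in hux.
by rewrite eqxx in huy.
Qed.

Lemma nbrs_add_other (T : finType) (X : {set {set T}}) x y v : v != x -> v != y ->
  nbrs ([set x; y] |: X) v = nbrs X v.
Proof.
move=> hvx hvy; apply/setP => u; rewrite !inE.
case huv: (u == v) => //=.
case: eqP => //= H.
have : v \in [set x; y] by rewrite -H set22.
by case/set2P => h; [move: hvx | move: hvy]; rewrite h eqxx.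
Qed.

Lemma card_sel_D1 (T : finType) (N : {set T}) (P : pred T) w : w \in N ->
  #|[set u in N | P u]| = #|[set u in N :\ w | P u]| + P w.
Proof.
move=> hw; case hP: (P w).
  rewrite (cardsD1 w) inE hw hP addnC; congr (_ + _).
  by apply: eq_card => u; rewrite !inE andbA.
rewrite addn0; apply: eq_card => u; rewrite !inE.
by case: eqP => // ->; rewrite hP andbF.
Qed.

Lemma card_sel_U1 (T : finType) (N : {set T}) (P : pred T) w : w \notin N ->
  #|[set u in w |: N | P u]| = #|[set u in N | P u]| + P w.
Proof.
move=> hw; rewrite (card_sel_D1 P (setU11 w N)) setU1K //.
Qed.

Lemma card_agree (A : finType) (S S' : {set A}) e0 :
  (forall e, e != e0 -> (e \in S) = (e \in S')) -> #|S| + (e0 \in S') = #|S'| + (e0 \in S).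
Proof.
move=> H; rewrite (cardsD1 e0 S) (cardsD1 e0 S').
have -> : S :\ e0 = S' :\ e0.
  by apply/setP => e; rewrite !inE; case: eqP => //= /eqP /H.
lia.
Qed.

Lemma deg_del (T : finType) (f : T -> bool) (X : {set {set T}}) x y : x != y -> [set x; y] \in X ->
  red_deg f X x = red_deg f (X :\ [set x; y]) x + ~~ f y /\
  blue_deg f X x = blue_deg f (X :\ [set x; y]) x + f y.
Proof.
move=> hxy hX; case: (nbrs_del hxy hX) => E1 Hy.
rewrite /red_deg /blue_deg E1; split; exact: (card_sel_D1 _ Hy).
Qed.

Lemma deg_add (T : finType) (f : T -> bool) (X : {set {set T}}) x y : x != y -> [set x; y] \notin X ->
  red_deg f ([set x; y] |: X) x = red_deg f X x + ~~ f y /\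
  blue_deg f ([set x; y] |: X) x = blue_deg f X x + f y.
Proof.
move=> hxy hX; case: (nbrs_add hxy hX) => E1 Hy.
rewrite /red_deg /blue_deg E1; split; exact: (card_sel_U1 _ Hy).
Qed.

Definition ok (T : finType) (f : T -> bool) (X : {set {set T}}) v :=
  red_deg f X v <= blue_deg f X v.

Lemma ok_del_other (T : finType) (f : T -> bool) (X : {set {set T}}) x y v :
  v != x -> v != y -> ok f (X :\ [set x; y]) v = ok f X v.
Proof. by move=> h1 h2; rewrite /ok /red_deg /blue_deg nbrs_del_other. Qed.

Lemma ok_add_other (T : finType) (f : T -> bool) (X : {set {set T}}) x y v :
  v != x -> v != y -> ok f ([set x; y] |: X) v = ok f X v.
Proof. by move=> h1 h2; rewrite /ok /red_deg /blue_deg nbrs_add_other. Qed.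

Lemma cost_del (T : finType) (E X : {set {set T}}) e : e \in X ->
  edit_cost E (X :\ e) + (e \notin E) = edit_cost E X + (e \in E).
Proof.
move=> he; rewrite /edit_cost.
have h1 := @card_agree _ (E :\: (X :\ e)) (E :\: X) e.
have h2 := @card_agree _ ((X :\ e) :\: E) (X :\: E) e.
have q1 : forall e', e' != e -> (e' \in E :\: (X :\ e)) = (e' \in E :\: X).
  by move=> e' ne; rewrite !inE ne.
have q2 : forall e', e' != e -> (e' \in (X :\ e) :\: E) = (e' \in X :\: E).
  by move=> e' ne; rewrite !inE ne.
move: (h1 q1) (h2 q2); rewrite !inE eqxx he /=; case: (e \in E) => /=; lia.
Qed.

Lemma cost_add (T : finType) (E X : {set {set T}}) e : e \notin X ->
  edit_cost E (e |: X) + (e \in E) = edit_cost E X + (e \notin E).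
Proof.
move=> he; rewrite /edit_cost.
have h1 := @card_agree _ (E :\: (e |: X)) (E :\: X) e.
have h2 := @card_agree _ ((e |: X) :\: E) (X :\: E) e.
have q1 : forall e', e' != e -> (e' \in E :\: (e |: X)) = (e' \in E :\: X).
  by move=> e' ne; rewrite !inE (negbTE ne).
have q2 : forall e', e' != e -> (e' \in (e |: X) :\: E) = (e' \in X :\: E).
  by move=> e' ne; rewrite !inE (negbTE ne).
move: (h1 q1) (h2 q2); rewrite !inE eqxx (negbTE he) /=; case: (e \in E) => /=; lia.
Qed.

Definition allc (T : finType) (f : T -> bool) (b : bool) (e : {set T}) :=
  [forall v in e, f v == b].

Lemma allc2 (T : finType) (f : T -> bool) b (x y : T) :
  allc f b [set x; y] = (f x == b) && (f y == b).
Proof.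
apply/forall_inP/andP.
  by move=> H; split; apply: H; rewrite !inE eqxx ?orbT.
by case=> h1 h2 v /set2P [] ->.
Qed.

Definition bad_edge (T : finType) (E : {set {set T}}) (f : T -> bool) (X : {set {set T}}) e :=
  ((e \in X) && (e \notin E) && ~~ allc f true e) ||
  ((e \in E) && (e \notin X) && ~~ allc f false e).

Definition badn (T : finType) (E : {set {set T}}) (f : T -> bool) (X : {set {set T}}) :=
  #|[set e | bad_edge E f X e]|.

Lemma bad_change (T : finType) (E : {set {set T}}) (f : T -> bool) (X Y : {set {set T}}) e :
  (forall e', e' != e -> (e' \in Y) = (e' \in X)) ->
  badn E f Y + bad_edge E f X e = badn E f X + bad_edge E f Y e.
Proof.
move=> H; have := @card_agree _ [set e | bad_edge E f Y e] [set e | bad_edge E f X e] e.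
rewrite !inE; apply => e' ne; rewrite !inE /bad_edge H //.
Qed.

Lemma simple_del (T : finType) (X : {set {set T}}) e :
  simple_edge_set X -> simple_edge_set (X :\ e).
Proof. by move=> hs e0; rewrite inE => /andP [_ /hs]. Qed.

Lemma simple_add (T : finType) (X : {set {set T}}) (x y : T) :
  x != y -> simple_edge_set X -> simple_edge_set ([set x; y] |: X).
Proof.
move=> hxy hs e0; case/setU1P => [-> | /hs //]; by rewrite cards2 hxy.
Qed.

Lemma step_rem (T : finType) (E X : {set {set T}}) (f : T -> bool) x y :
  simple_edge_set X -> (forall v, ok f X v) -> x != y -> [set x; y] \in X ->
  [set x; y] \notin E -> f x = false ->
  exists Z, [/\ simple_edge_set Z, (forall v, ok f Z v),
     edit_cost E Z <= edit_cost E X & badn E f Z < badn E f X].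
Proof.
move=> hs hok hxy hX hE fx.
set Y := X :\ [set x; y].
have cY := cost_del E hX; rewrite hE (negbTE hE) /= -/Y in cY.
have bY := @bad_change _ E f X Y [set x; y].
have bX : bad_edge E f X [set x; y] by rewrite /bad_edge hX hE allc2 fx.
have bY' : bad_edge E f Y [set x; y] = false.
  by rewrite /bad_edge !inE eqxx /= (negbTE hE).
rewrite bX bY' in bY.
have {}bY : badn E f Y < badn E f X.
  suff h: badn E f Y + 1 = badn E f X + 0 by rewrite addn0 in h; rewrite -h addn1.
  by apply: bY => e' ne; rewrite /Y !inE ne.
have hyx : y != x by rewrite eq_sym.
have hXy : [set y; x] \in X by rewrite setUC.
have [rx bx] := deg_del f hxy hX; rewrite -/Y in rx bx.
have [ry bly] := deg_del f hyx hXy.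
rewrite (setUC [set y]) -/Y in ry bly.
have okY : forall v, v != x -> v != y -> ok f Y v by move=> v h1 h2; rewrite ok_del_other // hok.
have okYy : ok f Y y.
  move: (hok y); rewrite /ok ry bly fx /= => hh; clear -hh; lia.
have sY : simple_edge_set Y by exact: simple_del.
case fy: (f y).
- rewrite fy /= in rx bx.
  have [lx|gx] := leqP (red_deg f Y x) (blue_deg f Y x).
    exists Y; split => //; last by clear -cY; lia.
    move=> v; have [->|vx] := eqVneq v x => //.
    have [->|vy] := eqVneq v y => //; exact: okY.
  have: 0 < red_deg f Y x by clear -gx; lia.
  case/card_gt0P => u; rewrite !inE => /andP [/andP [hux hYu] hu].
  rewrite /is_red in hu.
  rewrite setUC in hYu.
  have {}hYu : [set x; u] \in Y by move: hYu; rewrite /Y !inE.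
  have hxu : x != u by rewrite eq_sym.
  have huy : u != y by apply/eqP => h; move: hu; rewrite h fy.
  set Z := Y :\ [set x; u].
  have [rx2 bx2] := deg_del f hxu hYu.
  have hYu' : [set u; x] \in Y by rewrite setUC.
  have [ru2 bu2] := deg_del f hux hYu'.
  rewrite (setUC [set u]) -/Z in ru2 bu2; rewrite -/Z in rx2 bx2.
  have cZ := cost_del E hYu; rewrite -/Z in cZ.
  have bZ := @bad_change _ E f Y Z [set x; u].
  have bZ' : bad_edge E f Z [set x; u] = false.
    by rewrite /bad_edge !inE eqxx /= allc2 fx (negbTE hu) /= andbF.
  rewrite bZ' in bZ.
  have {}bZ : badn E f Z <= badn E f Y.
    suff h: badn E f Z + bad_edge E f Y [set x; u] = badn E f Y + 0.
      by rewrite addn0 in h; rewrite -h leq_addr.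
    by apply: bZ => e' ne; rewrite /Z !inE ne.
  exists Z; split.
  + exact: simple_del.
  + move=> v; have [->|vx] := eqVneq v x.
      rewrite /ok; rewrite (negbTE hu) /= in rx2 bx2.
      move: (hok x); rewrite /ok rx bx => hh.
      clear -rx2 bx2 hh gx; lia.
    have [->|vu] := eqVneq v u.
      move: (okY u hux huy); rewrite /ok ru2 bu2 fx /= => hh.
      clear -hh; lia.
    rewrite /Z ok_del_other //.
    have [->|vy] := eqVneq v y => //; exact: okY.
  + move: cZ; case: ([set x; u] \in E) => /= hh; clear -hh cY; lia.
  + clear -bZ bY; lia.
- rewrite fy /= in rx bx.
  exists Y; split => //; last by clear -cY; lia.
  move=> v; have [->|vx] := eqVneq v x.
    by move: (hok x); rewrite /ok rx bx => hh; clear -hh; lia.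
  have [->|vy] := eqVneq v y => //; exact: okY.
Qed.

Lemma step_add (T : finType) (E X : {set {set T}}) (f : T -> bool) x y :
  #|red_nodes f| < #|blue_nodes f| ->
  simple_edge_set X -> (forall v, ok f X v) -> x != y -> [set x; y] \in E ->
  [set x; y] \notin X -> f x = true ->
  exists Z, [/\ simple_edge_set Z, (forall v, ok f Z v),
     edit_cost E Z <= edit_cost E X & badn E f Z < badn E f X].
Proof.
move=> hRB hs hok hxy hE hX fx.
set Y := [set x; y] |: X.
have cY := cost_add E hX; rewrite hE /= -/Y in cY.
have bY := @bad_change _ E f X Y [set x; y].
have bX : bad_edge E f X [set x; y].
  by rewrite /bad_edge (negbTE hX) hE !allc2 fx.
have bY' : bad_edge E f Y [set x; y] = false.
  by rewrite /bad_edge !inE eqxx /= hE.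
rewrite bX bY' in bY.
have {}bY : badn E f Y < badn E f X.
  suff h: badn E f Y + 1 = badn E f X + 0 by rewrite addn0 in h; rewrite -h addn1.
  by apply: bY => e' ne; rewrite /Y !inE (negbTE ne).
have hyx : y != x by rewrite eq_sym.
have hXy : [set y; x] \notin X by rewrite setUC.
have [rx bx] := deg_add f hxy hX; rewrite -/Y in rx bx.
have [ry bly] := deg_add f hyx hXy.
rewrite (setUC [set y]) -/Y in ry bly.
have okY : forall v, v != x -> v != y -> ok f Y v by move=> v h1 h2; rewrite ok_add_other // hok.
have okYy : ok f Y y.
  move: (hok y); rewrite /ok ry bly fx /= => hh; clear -hh; lia.
have sY : simple_edge_set Y by exact: simple_add.
case fy: (f y).
- rewrite fy /= in rx bx.
  exists Y; split => //; last by clear -cY; lia.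
  move=> v; have [->|vx] := eqVneq v x.
    by move: (hok x); rewrite /ok rx bx => hh; clear -hh; lia.
  have [->|vy] := eqVneq v y => //; exact: okY.
rewrite fy /= in rx bx.
have [lx|gx] := leqP (red_deg f Y x) (blue_deg f Y x).
  exists Y; split => //; last by clear -cY; lia.
  move=> v; have [->|vx] := eqVneq v x => //.
  have [->|vy] := eqVneq v y => //; exact: okY.
have hr : red_deg f Y x <= #|red_nodes f|.
  apply: subset_leq_card; apply/subsetP => u; rewrite !inE => /andP [_ h]; exact h.
have hb : #|blue_nodes f| = #|blue_nodes f :\ x| + 1.
  by rewrite (cardsD1 x (blue_nodes f)) inE /is_blue fx addnC.
have hS : blue_deg f Y x = #|[set u in nbrs Y x | is_blue f u]| by [].
have : ~~ (blue_nodes f :\ x \subset [set u in nbrs Y x | is_blue f u]).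
  apply/negP => /subset_leq_card hh; rewrite -hS in hh.
  move: (hok x); rewrite /ok => hx.
  clear -hh hx rx bx gx hr hb hRB; lia.
case/subsetPn => u uB uS.
move: uB; rewrite !inE => /andP [hux fu]; rewrite /is_blue in fu.
have hnY : [set x; u] \notin Y.
  apply/negP => h; move: uS; rewrite inE /is_blue fu andbT /nbrs inE hux /= setUC h.
  by [].
have hxu : x != u by rewrite eq_sym.
have huy : u != y by apply/eqP => h; move: fu; rewrite h fy.
set Z := [set x; u] |: Y.
have [rx2 bx2] := deg_add f hxu hnY.
have hnY' : [set u; x] \notin Y by rewrite setUC.
have [ru2 bu2] := deg_add f hux hnY'.
rewrite (setUC [set u]) -/Z in ru2 bu2; rewrite -/Z in rx2 bx2.
have cZ := cost_add E hnY; rewrite -/Z in cZ.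
have bZ := @bad_change _ E f Y Z [set x; u].
have bZ' : bad_edge E f Z [set x; u] = false.
  by rewrite /bad_edge !inE eqxx /= !allc2 fx fu /= !andbF.
rewrite bZ' in bZ.
have {}bZ : badn E f Z <= badn E f Y.
  suff h: badn E f Z + bad_edge E f Y [set x; u] = badn E f Y + 0.
    by rewrite addn0 in h; rewrite -h leq_addr.
  by apply: bZ => e' ne; rewrite /Z !inE (negbTE ne).
exists Z; split.
+ exact: simple_add.
+ move=> v; have [->|vx] := eqVneq v x.
    rewrite /ok; rewrite fu /= in rx2 bx2.
    move: (hok x); rewrite /ok => hh.
    clear -rx2 bx2 hh gx rx bx; lia.
  have [->|vu] := eqVneq v u.
    move: (okY u hux huy); rewrite /ok ru2 bu2 fx /= => hh.
    clear -hh; lia.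
  rewrite /Z ok_add_other //.
  have [->|vy] := eqVneq v y => //; exact: okY.
+ move: cZ; case: ([set x; u] \in E) => /= hh; clear -hh cY; lia.
+ clear -bZ bY; lia.
Qed.

Lemma feasP (T : finType) (f : T -> bool) (X : {set {set T}}) :
  MIE_feasible f X <-> simple_edge_set X /\ forall v, ok f X v.
Proof.
rewrite /MIE_feasible /under_illusion /ok; split => -[hs h]; split => // v.
  by have := h v; case: ltnP.
by move: (h v); case: ltnP.
Qed.

Lemma step (T : finType) (E X : {set {set T}}) (f : T -> bool) :
  simple_edge_set E -> #|red_nodes f| < #|blue_nodes f| ->
  simple_edge_set X -> (forall v, ok f X v) -> 0 < badn E f X ->
  exists Z, [/\ simple_edge_set Z, (forall v, ok f Z v),
     edit_cost E Z <= edit_cost E X & badn E f Z < badn E f X].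
Proof.
move=> hsE hRB hs hok; case/card_gt0P => e; rewrite inE /bad_edge.
case/orP => /andP [/andP [h1 h2] h3].
- have /eqP/cards2P [x [y [hxy he]]] := hs e h1; subst e.
  move: h3; rewrite allc2 !eqb_id negb_and => /orP [] /negbTE hf.
  + exact: (step_rem hs hok hxy h1 h2 hf).
  + rewrite setUC in h1 h2; apply: (step_rem hs hok _ h1 h2 hf); by rewrite eq_sym.
- have /eqP/cards2P [x [y [hxy he]]] := hsE e h1; subst e.
  move: h3; rewrite allc2 !eqbF_neg negb_and !negbK => /orP [] hf.
  + exact: (step_add hRB hs hok hxy h1 h2 hf).
  + rewrite setUC in h1 h2; apply: (step_add hRB hs hok _ h1 h2 hf); by rewrite eq_sym.
Qed.

Lemma reduce (T : finType) (E : {set {set T}}) (f : T -> bool) c :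
  simple_edge_set E -> #|red_nodes f| < #|blue_nodes f| ->
  forall n X, simple_edge_set X -> (forall v, ok f X v) -> edit_cost E X <= c ->
  badn E f X <= n ->
  exists Z, [/\ simple_edge_set Z, (forall v, ok f Z v),
     edit_cost E Z <= c & badn E f Z = 0].
Proof.
move=> hsE hRB; elim=> [|n IH] X hs hok hc hb.
  by exists X; split => //; apply/eqP; rewrite -leqn0.
have [b0|bp] := posnP (badn E f X).
  by exists X.
have [Z [h1 h2 h3 h4]] := step hsE hRB hs hok bp.
apply: (IH Z) => //; [exact: leq_trans h3 hc | by rewrite -ltnS; exact: leq_trans h4 hb].
Qed.

Lemma opt_exists (T : finType) (E : {set {set T}}) (f : T -> bool) :
  forall n X, MIE_feasible f X -> edit_cost E X <= n -> exists Y, MIE_optimal f E Y.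
Proof.
elim=> [|n IH] X hX hc.
  exists X; split => // Z _; by move: hc; rewrite leqn0 => /eqP ->.
destruct (classic (forall Z, MIE_feasible f Z -> edit_cost E X <= edit_cost E Z)) as [H|H].
  by exists X.
case: (not_all_ex_not _ _ H) => Z HZ.
case: (imply_to_and _ _ HZ) => hZ hlt.
apply: (IH Z hZ); rewrite -ltnS; apply: leq_trans hc; rewrite ltnNge; exact/negP.
Qed.

Theorem mainTheorem5 (T : finType) (E : {set {set T}}) (f : T -> bool) :
  simple_edge_set E ->
  #|blue_nodes f| > #|red_nodes f| ->
  exists E' : {set {set T}},
    MIE_optimal f E E' /\
    (forall e, e \in E' :\: E -> forall v, v \in e -> is_blue f v) /\
    (forall e, e \in E :\: E' -> forall v, v \in e -> is_red f v).
Proof.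
move=> hsE hRB.
have f0 : MIE_feasible f set0.
  apply/feasP; split; first by move=> e; rewrite inE.
  move=> v; rewrite /ok /red_deg /blue_deg.
  have -> : nbrs set0 v = set0 by apply/setP => u; rewrite !inE andbF.
  by rewrite !(eq_card0 (fun u => _)) //; move=> u; rewrite !inE.
have [X0 [hX0 hopt]] := @opt_exists _ E f _ _ f0 (leqnn _).
move/feasP: (hX0) => [hs hok].
have [Z [h1 h2 h3 h4]] := reduce hsE hRB hs hok (leqnn _) (leqnn _).
exists Z; split.
  split; first by apply/feasP.
  move=> E'' h; apply: leq_trans h3 _; exact: hopt.
have hb : forall e, bad_edge E f Z e = false.
  move=> e; apply/negP => he.
  have : 0 < badn E f Z by apply/card_gt0P; exists e; rewrite inE.
  by rewrite h4.
split=> e; rewrite inE => /andP [ha hb'] v hv; move: (hb e); rewrite /bad_edge.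
- rewrite hb' ha /= andbF orbF => /negbFE /forall_inP /(_ v hv) /eqP.
  by rewrite /is_blue.
- rewrite (negbTE ha) hb' /= => /negbFE /forall_inP /(_ v hv) /eqP.
  by rewrite /is_red => ->.
Qed.
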